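(* Let $H$ be a finite set of non-vertical hyperplanes in $\mathbb{R}^d$ in generic coordinate position, and let $C$ be a $d$-dimensional cell of $\mathcal{A}(H)$. Let $\sigma$ be a first-stage prism of $C$ whose ceiling lies on the hyperplane $h^+$ and whose floor lies on $h^-$. Then for each hyperplane $h\in H\setminus\{h^+,h^-\}$, at most one of the flats $h^+\cap h$ and $h^-\cap h$ supports a $(d-2)$-face of $\partial\sigma$ (other than faces created by the vertical walls). It is $h^+\cap h$ if $C$ lies below $h$, and $h^-\cap h$ if $C$ lies above $h$. Consequently, if $n$ denotes the number of hyperplanes of $H$ supporting facets of $C$, the vertical projection of $\sigma$ onto $x_d=0$ is a convex polyhedron with at most $n-1$ facets.
   Context: For a convex cell $C$, let $f^+$ be a facet on its upper boundary (with respect to $x_d$) lying on the hyperplane $h^+$, and $f^-$ a facet on its lower boundary lying on $h^-$. If the intersection $P$ of the vertical projections of $f^+$ and $f^-$ onto $x_d=0$ is $(d-1)$-dimensional, the set $\sigma=\{p\in C:\text{the projection of } p \text{ lies in } P\}$ is a first-stage prism, with ceiling on $h^+$ and floor on $h^-$. *)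

(* Defs.v *)
(* Linear-geometric statement, stated over an arbitrary
   real (ordered) field R; R^d is encoded as R^(d-1) x R with d = k+1,
   the second component being the vertical coordinate x_d. *)
From HB Require Import structures.
From mathcomp Require Import all_boot all_order all_algebra.
Set Implicit Arguments. Unset Strict Implicit. Unset Printing Implicit Defensive.
Import Order.TTheory GRing.Theory Num.Theory.
Local Open Scope ring_scope.

Section Defs.
Variables (R : realFieldType) (k : nat).

Definition vdot (u v : 'rV[R]_k) : R := \sum_(i < k) u 0 i * v 0 i.

Definition point := ('rV[R]_k * R)%type.

(* a non-vertical hyperplane  x_d = a . x' + b , coded by (a, b) *)
Definition hyp := ('rV[R]_k * R)%type.

Definition ht (h : hyp) (x : 'rV[R]_k) : R := vdot h.1 x + h.2.
Definition on_hyp (h : hyp) (p : point) : Prop := p.2 = ht h p.1.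

Definition near (x y : 'rV[R]_k) (eps : R) : Prop :=
  forall i, `|y 0 i - x 0 i| < eps.

Definition full_dim (S : 'rV[R]_k -> Prop) : Prop :=
  exists x eps, 0 < eps /\ forall y, near x y eps -> S y.

Definition normal_row (h : hyp) : 'rV[R]_(k + 1) := row_mx h.1 (const_mx (-1)).
Definition aug_row (h : hyp) : 'rV[R]_(k + 1 + 1) :=
  row_mx (normal_row h) (const_mx h.2).

(* general position: any j <= d distinct hyperplanes meet in a (d-j)-flat
   (normals independent) and any d+1 of them have empty intersection
   (augmented (d+1)x(d+1) system nonsingular). *)
Definition general_position (H : seq hyp) : Prop :=
  forall S : seq hyp, uniq S -> {subset S <= H} -> (size S <= k.+2)%N ->
    row_free (\matrix_(i < size S) aug_row (nth (0, 0) S i)) /\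
    ((size S <= k.+1)%N ->
       row_free (\matrix_(i < size S) normal_row (nth (0, 0) S i))).

(* coefficients of the vertical projection of the flat h1 /\ h2, i.e. of the
   (d-2)-flat { x' : (a1 - a2) . x' + (b1 - b2) = 0 } of R^(d-1) *)
Definition diff_row (h1 h2 : hyp) : 'rV[R]_(k + 1) :=
  row_mx (h1.1 - h2.1) (const_mx (h1.2 - h2.2)).

(* generic coordinate position: general position, and the vertical
   projections of two distinct (d-2)-flats h1/\h2, h3/\h4 are distinct *)
Definition generic_coords (H : seq hyp) : Prop :=
  general_position H /\
  forall h1 h2 h3 h4, h1 \in H -> h2 \in H -> h3 \in H -> h4 \in H ->
    h1 != h2 -> h3 != h4 ->
    ~~ (((h1 == h3) && (h2 == h4)) || ((h1 == h4) && (h2 == h3))) ->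
    row_free (col_mx (diff_row h1 h2) (diff_row h3 h4)).

Definition side (s : bool) (h : hyp) (p : point) : bool :=
  if s then ht h p.1 <= p.2 else p.2 <= ht h p.1.
Definition sside (s : bool) (h : hyp) (p : point) : bool :=
  if s then ht h p.1 < p.2 else p.2 < ht h p.1.

(* C is a (closed) d-dimensional cell of A(H): the closure of a nonempty
   open region given by a sign vector s (s h = true : above h). *)
Definition is_dcell (H : seq hyp) (C : point -> Prop) : Prop :=
  exists s : hyp -> bool,
    (forall p, C p <-> forall h, h \in H -> side (s h) h p) /\
    exists p, forall h, h \in H -> sside (s h) h p.

Definition lies_below (C : point -> Prop) (h : hyp) : Prop :=
  forall p, C p -> p.2 <= ht h p.1.
Definition lies_above (C : point -> Prop) (h : hyp) : Prop :=
  forall p, C p -> ht h p.1 <= p.2.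

Definition supports_facet (C : point -> Prop) (h : hyp) : Prop :=
  full_dim (fun x => C (x, ht h x)).

Definition vproj (S : point -> Prop) : 'rV[R]_k -> Prop :=
  fun x => exists y, S (x, y).

(* P = projection of the facet C/\h+ intersected with projection of C/\h- *)
Definition prism_base (C : point -> Prop) (hp hm : hyp) : 'rV[R]_k -> Prop :=
  fun x => C (x, ht hp x) /\ C (x, ht hm x).

Definition first_stage_prism (H : seq hyp) (C : point -> Prop)
    (hp hm : hyp) (sigma : point -> Prop) : Prop :=
  [/\ hp \in H, lies_below C hp & supports_facet C hp] /\
  [/\ hm \in H, lies_above C hm & supports_facet C hm] /\
  full_dim (prism_base C hp hm) /\
  (forall p, sigma p <-> C p /\ prism_base C hp hm p.1).

(* The flat h1 /\ h2 supports a (d-2)-face of the convex set S: there is a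
   supporting hyperplane L : u.x' + w x_d + c = 0 of S such that the face
   S /\ L is contained in h1 /\ h2 and contains a relatively open piece of
   h1 /\ h2 (so it is (d-2)-dimensional with affine hull h1 /\ h2). *)
Definition supports_ridge (S : point -> Prop) (h1 h2 : hyp) : Prop :=
  exists (u : 'rV[R]_k) (w c : R),
    [/\ (u != 0) || (w != 0),
        forall p, S p -> vdot u p.1 + w * p.2 + c <= 0,
        forall p, S p -> vdot u p.1 + w * p.2 + c = 0 -> on_hyp h1 p /\ on_hyp h2 p
      & exists x0 eps, [/\ ht h1 x0 = ht h2 x0, 0 < eps &
          forall y, ht h1 y = ht h2 y -> near x0 y eps ->
            S (y, ht h1 y) /\ vdot u y + w * ht h1 y + c = 0]].

Definition polyhedron (Q : 'rV[R]_k -> Prop) : Prop :=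
  exists Hs : seq ('rV[R]_k * R),
    forall x, Q x <-> all (fun ce => vdot ce.1 x <= ce.2) Hs.

Definition facet_hyp (Q : 'rV[R]_k -> Prop) (c : 'rV[R]_k) (e : R) : Prop :=
  [/\ c != 0, forall x, Q x -> vdot c x <= e
    & exists x0 eps, [/\ vdot c x0 = e, 0 < eps &
        forall y, vdot c y = e -> near x0 y eps -> Q y]].

(* Q has at most m facets: the facet-supporting hyperplanes of Q are among
   at most m hyperplanes *)
Definition at_most_facets (Q : 'rV[R]_k -> Prop) (m : nat) : Prop :=
  exists Ls : seq ('rV[R]_k * R), (size Ls <= m)%N /\
    forall c e, facet_hyp Q c e ->
      exists2 ce, ce \in Ls & forall x, vdot c x = e <-> vdot ce.1 x = ce.2.

End Defs.

(* Main.v *)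
Require Import Defs.
From HB Require Import structures.
From mathcomp Require Import all_boot all_order all_algebra ring lra.
From Stdlib Require Import Classical.
Set Implicit Arguments. Unset Strict Implicit. Unset Printing Implicit Defensive.
Import Order.TTheory GRing.Theory Num.Theory.
Local Open Scope ring_scope.

Lemma vdotC {R : realFieldType} {k : nat} (u v : 'rV[R]_k) : vdot u v = vdot v u.
Proof. by rewrite /vdot; apply: eq_bigr => i _; rewrite mulrC. Qed.

Lemma vdotDl {R : realFieldType} {k : nat} (u v w : 'rV[R]_k) : vdot (u + v) w = vdot u w + vdot v w.
Proof. by rewrite /vdot -big_split; apply: eq_bigr => i _; rewrite mxE mulrDl. Qed.

Lemma vdotNl {R : realFieldType} {k : nat} (u w : 'rV[R]_k) : vdot (- u) w = - vdot u w.
Proof. by rewrite /vdot -sumrN; apply: eq_bigr => i _; rewrite mxE mulNr. Qed.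

Lemma vdotBl {R : realFieldType} {k : nat} (u v w : 'rV[R]_k) : vdot (u - v) w = vdot u w - vdot v w.
Proof. by rewrite vdotDl vdotNl. Qed.

Lemma vdotZl {R : realFieldType} {k : nat} (a : R) (u w : 'rV[R]_k) : vdot (a *: u) w = a * vdot u w.
Proof. by rewrite /vdot mulr_sumr; apply: eq_bigr => i _; rewrite mxE mulrA. Qed.

Lemma vdotDr {R : realFieldType} {k : nat} (u v w : 'rV[R]_k) : vdot w (u + v) = vdot w u + vdot w v.
Proof. by rewrite !(vdotC w) vdotDl. Qed.
Lemma vdotNr {R : realFieldType} {k : nat} (u w : 'rV[R]_k) : vdot w (- u) = - vdot w u.
Proof. by rewrite !(vdotC w) vdotNl. Qed.
Lemma vdotBr {R : realFieldType} {k : nat} (u v w : 'rV[R]_k) : vdot w (u - v) = vdot w u - vdot w v.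
Proof. by rewrite !(vdotC w) vdotBl. Qed.
Lemma vdotZr {R : realFieldType} {k : nat} (a : R) (u w : 'rV[R]_k) : vdot w (a *: u) = a * vdot w u.
Proof. by rewrite !(vdotC w) vdotZl. Qed.
Lemma vdot0l {R : realFieldType} {k : nat} (w : 'rV[R]_k) : vdot 0 w = 0.
Proof. by rewrite /vdot big1 // => i _; rewrite mxE mul0r. Qed.
Lemma vdot0r {R : realFieldType} {k : nat} (w : 'rV[R]_k) : vdot w 0 = 0.
Proof. by rewrite vdotC vdot0l. Qed.

Lemma vdot_ge0 {R : realFieldType} {k : nat} (u : 'rV[R]_k) : 0 <= vdot u u.
Proof. by rewrite /vdot sumr_ge0 // => i _; rewrite -expr2 sqr_ge0. Qed.

Lemma vdot_eq0 {R : realFieldType} {k : nat} (u : 'rV[R]_k) : vdot u u = 0 -> u = 0.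
Proof.
move=> /eqP; rewrite /vdot psumr_eq0 => [/allP H|i _]; last by rewrite -expr2 sqr_ge0.
apply/rowP => i; rewrite mxE; have := H i (mem_index_enum i).
by rewrite -expr2 sqrf_eq0 => /eqP.
Qed.

Lemma vdot_gt0 {R : realFieldType} {k : nat} (u : 'rV[R]_k) : u != 0 -> 0 < vdot u u.
Proof. by move=> u0; rewrite lt_def vdot_ge0 andbT; apply: contra u0 => /eqP/vdot_eq0 ->. Qed.

Definition nrm1 {R : realFieldType} {k : nat} (u : 'rV[R]_k) : R := \sum_(i < k) `|u 0 i|.

Lemma nrm1_ge0 {R : realFieldType} {k : nat} (u : 'rV[R]_k) : 0 <= nrm1 u.
Proof. by rewrite /nrm1 sumr_ge0. Qed.

Lemma vdot_bound {R : realFieldType} {k : nat} (a x y : 'rV[R]_k) r :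
  near x y r -> `|vdot a y - vdot a x| <= nrm1 a * r.
Proof.
move=> N; rewrite -vdotBr /vdot /nrm1 mulr_suml.
apply: le_trans (ler_norm_sum _ _ _) _; apply: ler_sum => i _.
rewrite normrM ler_wpM2l // !mxE ltW //; exact: N.
Qed.

Lemma near_refl {R : realFieldType} {k : nat} (x : 'rV[R]_k) r : 0 < r -> near x x r.
Proof. by move=> r0 i; rewrite subrr normr0. Qed.

Lemma near_trans {R : realFieldType} {k : nat} (x y z : 'rV[R]_k) r s :
  near x y r -> near y z s -> near x z (r + s).
Proof.
move=> N1 N2 i; have -> : z 0 i - x 0 i = (z 0 i - y 0 i) + (y 0 i - x 0 i) by rewrite addrA subrK.
by apply: le_lt_trans (ler_normD _ _) _; rewrite addrC ltrD.
Qed.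

Lemma near_mono {R : realFieldType} {k : nat} (x y : 'rV[R]_k) r s :
  near x y r -> r <= s -> near x y s.
Proof. by move=> N rs i; exact: lt_le_trans (N i) rs. Qed.

Lemma near_step {R : realFieldType} {k : nat} (x v : 'rV[R]_k) r t :
  0 < r -> `|t| * (1 + nrm1 v) < r -> near x (x + t *: v) r.
Proof.
move=> r0 H i; rewrite !mxE addrAC subrr add0r normrM; apply: le_lt_trans H.
rewrite ler_wpM2l //; apply: le_trans (_ : nrm1 v <= _); last by rewrite lerDr.
by rewrite /nrm1 (bigD1 i) //= lerDl sumr_ge0.
Qed.


Lemma core {R : realFieldType} {k : nat} (a1 a2 z : 'rV[R]_k) b1 b2 r :
  0 < r -> vdot a1 z + b1 = 0 -> vdot a2 z + b2 = 0 ->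
  (forall y, near z y r -> vdot a1 y + b1 = 0 -> vdot a2 y + b2 <= 0) ->
  exists l, a2 = l *: a1 /\ b2 = l * b1.
Proof.
move=> r0 e1 e2 H.
set l := vdot a2 a1 / vdot a1 a1.
set v := a2 - l *: a1.
have h1 : vdot a1 v = 0.
  rewrite /v vdotBr vdotZr vdotC /l.
  have [/vdot_eq0 ->|nz] := eqVneq (vdot a1 a1) 0.
    by rewrite ?vdot0l ?vdot0r ?mulr0 ?mul0r ?subr0.
  by rewrite mulfVK // subrr.
set t := r / (2 * (1 + nrm1 v)).
have p1 : 0 < 1 + nrm1 v by apply: lt_le_trans (ltr01) _; rewrite lerDl nrm1_ge0.
have t0 : 0 < t by rewrite divr_gt0 // mulr_gt0.
have tl : forall s : R, `|s| = t -> `|s| * (1 + nrm1 v) < r.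
  move=> s ->; have -> : t * (1 + nrm1 v) = r / 2.
    by rewrite /t invfM (mulrC 2^-1) mulrA mulrAC divfK ?gt_eqF.
  by rewrite ltr_pdivrMr // ltr_pMr // ltr1n.
have key : forall s : R, `|s| = t -> s * vdot a2 v <= 0.
  move=> s hs.
  have := H (z + s *: v) (@near_step _ _ z v r s r0 (tl s hs)).
  rewrite vdotDr vdotZr h1 mulr0 addr0 e1 => /(_ erefl).
  by rewrite vdotDr vdotZr addrAC e2 add0r.
have k1 := key t (gtr0_norm t0).
have k2 := key (- t) ltac:(by rewrite normrN gtr0_norm).
have a2v : vdot a2 v = 0.
  apply/eqP; rewrite eq_le; rewrite pmulr_rle0 // in k1; rewrite k1 /=.
  by rewrite mulNr oppr_le0 pmulr_rge0 in k2.
have v0 : v = 0.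
  apply: vdot_eq0; rewrite {1}/v vdotBl vdotZl a2v h1 mulr0 subrr //.
exists l; split; first by move/eqP: v0; rewrite subr_eq0 => /eqP.
have : a2 = l *: a1 by move/eqP: v0; rewrite subr_eq0 => /eqP.
move=> ea.
have eb1 : b1 = - vdot a1 z by apply/eqP; rewrite -addr_eq0 addrC e1.
have eb2 : b2 = - vdot a2 z by apply/eqP; rewrite -addr_eq0 addrC e2.
by rewrite eb2 eb1 ea vdotZl mulrN.
Qed.


Lemma rf_kill {R : realFieldType} {m n : nat} (A : 'M[R]_(m, n)) (w : 'rV_m) :
  row_free A -> w *m A = 0 -> w = 0.
Proof. by move=> /row_free_inj inj e; apply: inj; rewrite /= e mul0mx. Qed.

Lemma K2 {R : realFieldType} {n : nat} (r1 r2 : 'rV[R]_n) l :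
  r2 = l *: r1 -> ~ row_free (col_mx r1 r2).
Proof.
move=> e rf.
have := rf_kill (w := row_mx (l%:M : 'M_1) (- 1%:M : 'M_1)) rf.
rewrite mul_row_col mulNmx mul1mx mul_scalar_mx e subrr => /(_ erefl) /rowP.
move=> /(_ (rshift 1 ord0)); rewrite row_mxEr !mxE /= => /eqP.
by rewrite oppr_eq0 oner_eq0.
Qed.

Lemma K3 {R : realFieldType} {k : nat} (g h j : hyp R k) l :
  j.1 - h.1 = l *: (g.1 - h.1) -> j.2 - h.2 = l * (g.2 - h.2) ->
  ~ row_free (\matrix_(i < size [:: g; h; j]) aug_row (nth (0, 0) [:: g; h; j] i)).
Proof.
move=> e1 e2 rf.
have := rf_kill (w := \row_(i < 3) nth 0 [:: l; 1 - l; -1] i) rf.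
rewrite mulmx_sum_row !big_ord_recl big_ord0 !rowK !mxE /=.
have E : l *: aug_row g + ((1 - l) *: aug_row h + (-1 *: aug_row j + 0)) = 0.
  rewrite addr0 /aug_row /normal_row !scale_row_mx !add_row_mx.
  have -> : l *: g.1 + ((1 - l) *: h.1 + -1 *: j.1) = 0.
    apply/rowP => i; move/rowP: e1 => /(_ i); rewrite !mxE => e.
    have -> : j.1 0 i = h.1 0 i + l * (g.1 0 i - h.1 0 i) by rewrite -e; ring.
    ring.
  have -> : l *: const_mx (-1) + ((1 - l) *: const_mx (-1) + -1 *: const_mx (-1)) = 0 :> 'rV[R]_1.
    apply/rowP => i; rewrite !mxE; ring.
  have -> : l *: const_mx g.2 + ((1 - l) *: const_mx h.2 + -1 *: const_mx j.2) = 0 :> 'rV[R]_1.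
    apply/rowP => i; rewrite !mxE.
    have : j.2 = h.2 + l * (g.2 - h.2) by rewrite -e2; ring.
    move=> ->; ring.
  by rewrite !row_mx0.
move=> /(_ E) /rowP /(_ (inord 2)); rewrite !mxE inordK //= => /eqP.
by rewrite oppr_eq0 oner_eq0.
Qed.


Definition ev {R : realFieldType} {k : nat} (p : 'rV[R]_k * R) (x : 'rV[R]_k) : R :=
  vdot p.1 x + p.2.

Lemma cont_pos {R : realFieldType} {k : nat} (p : 'rV[R]_k * R) x y :
  0 < ev p y -> near y x (ev p y / (1 + nrm1 p.1)) -> 0 < ev p x.
Proof.
move=> py N; have := vdot_bound p.1 N.
have n0 := nrm1_ge0 p.1.
have p1 : 0 < 1 + nrm1 p.1 by apply: lt_le_trans ltr01 _; rewrite lerDl.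
have lt : nrm1 p.1 * (ev p y / (1 + nrm1 p.1)) < ev p y.
  rewrite mulrA ltr_pdivrMr // mulrC ltr_pM2l //; lra.
move=> B; have := le_lt_trans B lt; rewrite distrC => H.
have := le_lt_trans (ler_norm _) H; rewrite /ev in py * => H2; lra.
Qed.

Lemma tlemma {R : realFieldType} (L : seq (R * R)) :
  (forall ab, ab \in L -> 0 <= ab.1 /\ (0 < ab.1 \/ 0 <= ab.2)) ->
  exists2 t, 0 < t & forall ab, ab \in L -> forall s, 0 <= s <= t -> 0 <= ab.1 + s * ab.2.
Proof.
elim: L => [|[a b] L IH] H.
  by exists 1 => //.
have [t t0 Ht] : exists2 t, 0 < t & forall ab, ab \in L -> forall s, 0 <= s <= t -> 0 <= ab.1 + s * ab.2.
  by apply: IH => ab abL; apply: H; rewrite inE abL orbT.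
have [a0 ab] := H (a, b) (mem_head _ _); rewrite /= in a0 ab.
have [pos|neg] := leP 0 (a + t * b).
  exists t => // ab'; rewrite inE => /orP [/eqP -> s /andP [s0 st] /=|/Ht //].
  have [b0|b0] := leP 0 b; first by apply: addr_ge0 => //; apply: mulr_ge0.
  apply: le_trans pos _; rewrite lerD2l; rewrite ler_wnM2r //; exact: ltW.
have bn : b < 0 by apply: contraTT neg; rewrite -!leNgt => b0; apply: addr_ge0 => //; apply: mulr_ge0 => //; exact: ltW.
have apos : 0 < a by case: ab => // b0; move: bn; rewrite ltNge b0.
exists (a / - b); first by rewrite divr_gt0 // oppr_gt0.
move=> ab'; rewrite inE => /orP [/eqP -> s /andP [s0 st] /=|abL s /andP [s0 st]].
  have : s * b >= (a / - b) * b by rewrite ler_wnM2r //; exact: ltW.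
  rewrite invrN mulrN mulNr divfK ?lt_eqF // => h; lra.
apply: Ht => //; rewrite s0 /=; apply: le_trans st _.
have : a < t * - b by lra.
rewrite -ltr_pdivrMr ?oppr_gt0 // => /ltW //.
Qed.

Lemma half_pos {R : realFieldType} (r : R) : 0 < r -> 0 < r / 2.
Proof. by move=> r0; rewrite divr_gt0. Qed.

Lemma near_half {R : realFieldType} {k : nat} (x y z : 'rV[R]_k) r :
  near x y (r / 2) -> near y z (r / 2) -> near x z r.
Proof.
move=> N1 N2; have := near_trans N1 N2.
by have -> : r / 2 + r / 2 = r by field.
Qed.

Lemma avoid {R : realFieldType} {k : nat} (a : 'rV[R]_k) b (Ps : seq ('rV[R]_k * R)) z r :
  0 < r -> vdot a z + b = 0 ->
  (forall p, p \in Ps -> forall y, near z y r -> vdot a y + b = 0 -> 0 <= ev p y) ->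
  (forall p, p \in Ps -> forall z' r', 0 < r' -> vdot a z' + b = 0 ->
      ~ (forall y, near z' y r' -> vdot a y + b = 0 -> ev p y = 0)) ->
  exists z' r', [/\ 0 < r', vdot a z' + b = 0, (forall y, near z' y r' -> near z y r) &
     forall p, p \in Ps -> forall y, near z' y r' -> 0 < ev p y].
Proof.
move=> r0 Wz; elim: Ps => [|p Ps IH] H1 H2.
  by exists z, r; split => // p; rewrite in_nil.
have [z1 [r1 [r10 Wz1 N1 P1]]] : exists z' r', [/\ 0 < r', vdot a z' + b = 0, (forall y, near z' y r' -> near z y r) &
     forall p, p \in Ps -> forall y, near z' y r' -> 0 < ev p y].
  apply: IH.
    by move=> q qP; apply: H1; rewrite inE qP orbT.
  by move=> q qP; apply: H2; rewrite inE qP orbT.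
have := H2 p (mem_head _ _) z1 (r1 / 2) (half_pos r10) Wz1.
move=> /not_all_ex_not [y Hy].
have [Ny Hy2] := imply_to_and _ _ Hy.
have [Wy nz] := imply_to_and _ _ Hy2.
have Ny' : near z1 y r1 by apply: near_mono Ny _; rewrite ler_pdivrMr // ler_pMr // ler1n.
have py : 0 < ev p y.
  rewrite lt_def; apply/andP; split; first by apply/eqP.
  by apply: H1 (mem_head _ _) _ (N1 _ Ny') Wy.
have p1 : 0 < 1 + nrm1 p.1 by apply: lt_le_trans ltr01 _; rewrite lerDl nrm1_ge0.
exists y, (Order.min (r1 / 2) (ev p y / (1 + nrm1 p.1))); split => //.
- by rewrite lt_min half_pos //= divr_gt0.
- move=> x Nx; apply: N1; apply: near_half Ny _; apply: near_mono Nx _.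
  by rewrite ge_min lexx.
- move=> q; rewrite inE => /orP [/eqP -> x Nx|qP x Nx].
    by apply: cont_pos py _; apply: near_mono Nx _; rewrite ge_min lexx orbT.
  apply: P1 qP _ _; apply: near_half Ny _; apply: near_mono Nx _.
  by rewrite ge_min lexx.
Qed.


Lemma ev_diff {R : realFieldType} {k : nat} (g i : hyp R k) x :
  vdot (g.1 - i.1) x + (g.2 - i.2) = ht g x - ht i x.
Proof. by rewrite vdotBl /ht; ring. Qed.

Definition slack {R : realFieldType} {k : nat} (s : bool) (i g : hyp R k) : 'rV[R]_k * R :=
  if s then (g.1 - i.1, g.2 - i.2) else (i.1 - g.1, i.2 - g.2).

Lemma side_slack {R : realFieldType} {k : nat} s (i g : hyp R k) x :
  side s i (x, ht g x) = (0 <= ev (slack s i g) x).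
Proof. by case: s; rewrite /side /slack /ev /= ev_diff subr_ge0. Qed.

Lemma KeyGen {R : realFieldType} {k : nat} (H : seq (hyp R k)) h1 h2 h3 h4 x0 eps :
  generic_coords H -> h1 \in H -> h2 \in H -> h3 \in H -> h4 \in H ->
  h1 != h2 -> h3 != h4 -> ~~ (((h1 == h3) && (h2 == h4)) || ((h1 == h4) && (h2 == h3))) ->
  0 < eps -> ht h1 x0 = ht h2 x0 ->
  (forall y, near x0 y eps -> ht h1 y = ht h2 y -> ht h3 y = ht h4 y) -> False.
Proof.
move=> [_ G] i1 i2 i3 i4 n12 n34 np e0 e12 Hy.
have := G _ _ _ _ i1 i2 i3 i4 n12 n34 np.
have A1 : vdot (h1.1 - h2.1) x0 + (h1.2 - h2.2) = 0 by rewrite ev_diff e12 subrr.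
have A2 : vdot (h3.1 - h4.1) x0 + (h3.2 - h4.2) = 0 by rewrite ev_diff Hy ?subrr //; apply: near_refl.
have A3 : forall y, near x0 y eps -> vdot (h1.1 - h2.1) y + (h1.2 - h2.2) = 0 ->
    vdot (h3.1 - h4.1) y + (h3.2 - h4.2) <= 0.
  move=> y Ny; rewrite !ev_diff => /eqP; rewrite subr_eq0 => /eqP /(Hy y Ny) ->.
  by rewrite subrr.
have [l [el1 el2]] := core e0 A1 A2 A3.
apply: (K2 (l := l)); rewrite /diff_row scale_row_mx el1; congr row_mx.
by apply/rowP => i; rewrite !mxE el2.
Qed.

Lemma Key3 {R : realFieldType} {k : nat} (H : seq (hyp R k)) g h j x0 eps :
  (1 <= k)%N -> general_position H -> g \in H -> h \in H -> j \in H ->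
  g != h -> j != g -> j != h -> 0 < eps -> ht g x0 = ht h x0 ->
  (forall y, near x0 y eps -> ht g y = ht h y -> ht j y = ht h y) -> False.
Proof.
move=> k1 G gH hH jH ngh njg njh e0 e12 Hy.
have A1 : vdot (g.1 - h.1) x0 + (g.2 - h.2) = 0 by rewrite ev_diff e12 subrr.
have A2 : vdot (j.1 - h.1) x0 + (j.2 - h.2) = 0 by rewrite ev_diff Hy ?subrr //; apply: near_refl.
have A3 : forall y, near x0 y eps -> vdot (g.1 - h.1) y + (g.2 - h.2) = 0 ->
    vdot (j.1 - h.1) y + (j.2 - h.2) <= 0.
  move=> y Ny; rewrite !ev_diff => /eqP; rewrite subr_eq0 => /eqP /(Hy y Ny) ->.
  by rewrite subrr.
have [l [el1 el2]] := core e0 A1 A2 A3.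
have U : uniq [:: g; h; j].
  rewrite /= !inE negb_or ngh /= andbT eq_sym njg /=; by rewrite eq_sym njh.
have Sb : {subset [:: g; h; j] <= H} by move=> x; rewrite !inE => /or3P [] /eqP ->.
have Sz : (size [:: g; h; j] <= k.+2)%N by [].
exact: (K3 el1 el2 (G _ U Sb Sz).1).
Qed.


Lemma ev_slack {R : realFieldType} {k : nat} s (i g : hyp R k) y :
  ev (slack s i g) y = if s then ht g y - ht i y else ht i y - ht g y.
Proof. by case: s; rewrite /ev /slack /= ev_diff. Qed.

Lemma hyp_eq {R : realFieldType} {k : nat} (g j : hyp R k) :
  g.1 - j.1 = 0 -> g.2 - j.2 = 0 -> g = j.
Proof.
by case: g j => [g1 g2] [j1 j2] /= /eqP; rewrite subr_eq0 => /eqP -> /eqP; rewrite subr_eq0 => /eqP ->.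
Qed.

Lemma facet_lemma {R : realFieldType} {k : nat} (H : seq (hyp R k)) (s : hyp R k -> bool)
    (C : point R k -> Prop) g j x0 eps :
  (1 <= k)%N -> general_position H ->
  (forall p, C p <-> forall h, h \in H -> side (s h) h p) ->
  g \in H -> j \in H -> g != j -> 0 < eps -> ht g x0 = ht j x0 ->
  (forall y, near x0 y eps -> ht g y = ht j y -> C (y, ht j y)) ->
  full_dim (fun x => C (x, ht j x)).
Proof.
move=> k1 G Cdef gH jH ngj e0 e1 Hy.
set a := g.1 - j.1; set b := g.2 - j.2.
have Wiff : forall y, (vdot a y + b = 0) <-> ht g y = ht j y.
  by move=> y; rewrite ev_diff; split => [/eqP|->]; [rewrite subr_eq0 => /eqP|rewrite subrr].
set Ps := [seq slack (s i) i j | i <- H & (i != g) && (i != j)].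
have PsP : forall p, p \in Ps -> exists i, [/\ p = slack (s i) i j, i \in H, i != g & i != j].
  move=> p /mapP [i]; rewrite mem_filter => /andP [/andP [ig ij] iH] ->.
  by exists i.
have [z [r [r0 Wz Nz Pz]]] : exists z' r', [/\ 0 < r', vdot a z' + b = 0, (forall y, near z' y r' -> near x0 y eps) &
     forall p, p \in Ps -> forall y, near z' y r' -> 0 < ev p y].
  apply: avoid => //; first by apply/Wiff.
    move=> p /PsP [i [-> iH _ _]] y Ny /Wiff Wy.
    by rewrite -side_slack; move/Cdef: (Hy y Ny Wy); apply.
  move=> p /PsP [i [-> iH ig ij]] z' r' r0 /Wiff Wz' Hz.
  apply: (Key3 k1 G gH jH iH ngj ig ij r0 Wz') => y Ny /[dup] Wy /Wiff Wy'.
  have := Hz y Ny Wy'; rewrite ev_slack; case: (s i) => /eqP; rewrite subr_eq0 => /eqP //.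
have a0 : a != 0.
  apply/negP => /eqP a0; move: Wz; rewrite a0 vdot0l add0r => b0.
  by move/eqP: ngj; apply; apply: hyp_eq.
set sg := if s g then -1 else 1 : R.
have sg2 : sg * sg = 1 by rewrite /sg; case: (s g); rewrite ?mulrNN mulr1.
have evg : forall x, ev (slack (s g) g j) x = sg * (vdot a x + b).
  move=> x; rewrite ev_slack ev_diff /sg; case: (s g); ring.
have p1 : 0 < 1 + nrm1 a by apply: lt_le_trans ltr01 _; rewrite lerDl nrm1_ge0.
set rho := r / (4 * (1 + nrm1 a)).
have rho0 : 0 < rho by rewrite divr_gt0 // mulr_gt0.
set x1 := z + (sg * rho) *: a.
have N1 : near z x1 (r / 2).
  apply: near_step; first exact: half_pos.
  have -> : `|sg * rho| = rho.
    rewrite normrM (gtr0_norm rho0) /sg; case: (s g); rewrite ?normrN ?normr1 ?mul1r //.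
  rewrite /rho invfM (mulrC 4^-1) mulrA mulrAC divfK ?gt_eqF //.
  rewrite ltr_pM2l // ltf_pV2 ?posrE //; lra.
set vg := ev (slack (s g) g j) x1.
have vg0 : 0 < vg.
  rewrite /vg evg /x1 vdotDr vdotZr addrAC Wz add0r !mulrA sg2 mul1r.
  by rewrite mulr_gt0 // vdot_gt0.
exists x1, (Order.min (r / 2) (vg / (1 + nrm1 (slack (s g) g j).1))); split.
  by rewrite lt_min half_pos //= divr_gt0 //; apply: lt_le_trans ltr01 _; rewrite lerDl nrm1_ge0.
move=> x Nx; apply/Cdef => i iH; rewrite side_slack.
have [->|ij] := eqVneq i j.
  by rewrite ev_slack; case: (s j); rewrite subrr.
have [->|ig] := eqVneq i g.
  apply: ltW; apply: cont_pos vg0 _; apply: near_mono Nx _; by rewrite ge_min lexx orbT.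
apply: ltW; apply: Pz.
  by apply/mapP; exists i => //; rewrite mem_filter ig ij iH.
by apply: near_half N1 _; apply: near_mono Nx _; rewrite ge_min lexx.
Qed.


Theorem mainTheorem12 (R : realFieldType) (k : nat) (H : seq (hyp R k))
    (C : point R k -> Prop) (hp hm : hyp R k) (sigma : point R k -> Prop) :
  (1 <= k)%N -> uniq H -> generic_coords H -> is_dcell H C ->
  first_stage_prism H C hp hm sigma ->
  (forall h, h \in H -> h != hp -> h != hm ->
     [/\ supports_ridge sigma hp h -> lies_below C h,
         supports_ridge sigma hm h -> lies_above C h
       & ~ (supports_ridge sigma hp h /\ supports_ridge sigma hm h)]) /\
  (forall Hf : seq (hyp R k), uniq Hf ->
     (forall h, h \in Hf <-> h \in H /\ supports_facet C h) ->
     polyhedron (vproj sigma) /\ at_most_facets (vproj sigma) (size Hf).-1).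
Proof.
move=> k1 UH GC [s [Cdef [p pint]]] [[hpH Cbp Fp] [[hmH Cam Fm] [Pfull sigdef]]].
have pC : C p by apply/Cdef => h hH; have := pint h hH; rewrite /side /sside; case: (s h) => /ltW.
have below : forall h, h \in H -> s h = false -> lies_below C h.
  by move=> h hH sh q /Cdef /(_ h hH); rewrite /side sh.
have above : forall h, h \in H -> s h = true -> lies_above C h.
  by move=> h hH sh q /Cdef /(_ h hH); rewrite /side sh.
have notboth : forall h, h \in H -> lies_below C h -> lies_above C h -> False.
  move=> h hH b a; have := b p pC; have := a p pC; have := pint h hH.
  by rewrite /sside; case: (s h) => ? ? ?; lra.
have hpm : hp != hm.
  apply/eqP => E; apply: (notboth hp hpH Cbp); rewrite E; exact: Cam.
have Qiff : forall x, vproj sigma x <-> C (x, ht hp x) /\ C (x, ht hm x).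
  move=> x; split.
    by move=> [y /sigdef [_ [A B]]].
  move=> [A B]; exists (ht hp x); apply/sigdef; split => //.
have Cs : forall g x, C (x, ht g x) <-> forall i, i \in H -> 0 <= ev (slack (s i) i g) x.
  move=> g x; split.
    by move=> /Cdef Hc i iH; rewrite -side_slack; apply: Hc.
  by move=> Hc; apply/Cdef => i iH; rewrite side_slack; apply: Hc.
have hmle : forall y z, C (y, z) -> ht hm y <= ht hp y.
  move=> y z Cy; have := Cbp _ Cy; have := Cam _ Cy => /= ? ?; lra.
split.
  move=> h hH nhp nhm.
  have ra : supports_ridge sigma hp h -> lies_below C h.
    move=> [u [w [c [_ _ _ [x0 [eps [E0 e0 Hy]]]]]]].
    case sh: (s h); last exact: below.
    exfalso; apply: (KeyGen (h1 := hp) (h2 := h) (h3 := hm) (h4 := h) GC hpH hH hmH hH _ _ _ e0 E0).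
    - by rewrite eq_sym.
    - by rewrite eq_sym.
    - by rewrite (negbTE hpm) /= eq_sym (negbTE nhp).
    move=> y Ny Ey; have [/sigdef [_ [_ Bm]] _] := Hy y Ey Ny.
    have := above h hH sh _ Bm; have := hmle _ _ Bm => /= ? ?; lra.
  have rb : supports_ridge sigma hm h -> lies_above C h.
    move=> [u [w [c [_ _ _ [x0 [eps [E0 e0 Hy]]]]]]].
    case sh: (s h); first exact: above.
    exfalso; apply: (KeyGen (h1 := hm) (h2 := h) (h3 := hp) (h4 := h) GC hmH hH hpH hH _ _ _ e0 E0).
    - by rewrite eq_sym.
    - by rewrite eq_sym.
    - by rewrite eq_sym (negbTE hpm) /= eq_sym (negbTE nhm).
    move=> y Ny Ey; have [/sigdef [_ [Bp _]] _] := Hy y Ey Ny.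
    have := below h hH sh _ Bp; have := hmle _ _ Bp => /= ? ?; lra.
  split => // [[A B]]; exact: notboth hH (ra A) (rb B).

move=> Hf UHf Hfdef.
have hpHf : hp \in Hf by apply/Hfdef.
have hmHf : hm \in Hf by apply/Hfdef.
set Phi := [seq slack (s i) i hp | i <- H] ++ [seq slack (s i) i hm | i <- H].
have QPhi : forall x, vproj sigma x <-> forall q, q \in Phi -> 0 <= ev q x.
  move=> x; rewrite Qiff (Cs hp) (Cs hm); split.
    move=> [A B] q; rewrite mem_cat => /orP [] /mapP [i iH ->]; [exact: A|exact: B].
  move=> Hq; split => i iH; apply: Hq; rewrite mem_cat; apply/orP; [left|right];
    by apply/mapP; exists i.
split.
  exists [seq (- q.1, q.2) | q <- Phi] => x; rewrite QPhi; split.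
    move=> Hq; apply/allP => ce /mapP [q qP ->] /=.
    by rewrite vdotNl -subr_ge0 opprK addrC; apply: Hq.
  move=> /allP Ha q qP; have := Ha (- q.1, q.2) (map_f _ qP).
  by rewrite /= vdotNl -subr_ge0 opprK addrC.
set entry := fun i : hyp R k => if s i then (hm.1 - i.1, i.2 - hm.2) else (hp.1 - i.1, i.2 - hp.2).
have entryE : forall (g i : hyp R k) x, vdot (g.1 - i.1) x = i.2 - g.2 <-> ht g x = ht i x.
  move=> g i x; rewrite vdotBl /ht; split => E; lra.
exists ((hp.1 - hm.1, hm.2 - hp.2) :: [seq entry i | i <- Hf & (i != hp) && (i != hm)]).
split.
  rewrite /= size_map.
  have -> : [seq i <- Hf | (i != hp) && (i != hm)] = rem hm (rem hp Hf).
    rewrite rem_filter ?rem_uniq // rem_filter // -filter_predI.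
    by apply: eq_filter => i /=; rewrite andbC.
  have hmr : hm \in rem hp Hf by rewrite mem_rem_uniq // inE eq_sym hpm.
  rewrite size_rem //.
  have : (0 < size (rem hp Hf))%N by case: (rem hp Hf) hmr.
  by rewrite (size_rem hpHf); case: ((size Hf).-1).
move=> c e [c0 Qle [x0 [eps [ce0 e0 Piece]]]].
have Qx0 : vproj sigma x0 by apply: Piece => //; exact: near_refl.
have cc0 : 0 < vdot c c by exact: vdot_gt0.
have [hasT|hasN] := boolP (has (fun q => (ev q x0 == 0) && (vdot q.1 c < 0)) Phi); last first.
  exfalso.
  have TL : forall ab, ab \in [seq (ev q x0, vdot q.1 c) | q <- Phi] -> 0 <= ab.1 /\ (0 < ab.1 \/ 0 <= ab.2).
    move=> ab /mapP [q qP ->] /=; have q0 := (QPhi x0).1 Qx0 q qP; split => //.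
    have := hasPn hasN q qP; rewrite /= negb_and -leNgt.
    case: (ltP 0 (ev q x0)) => [q1|q1]; first by left.
    have -> : ev q x0 = 0 by apply/eqP; rewrite eq_le q1 q0.
    by rewrite eqxx /= => q2; right.
  have [t t0 Ht] := tlemma TL.
  have Q1 : vproj sigma (x0 + t *: c).
    apply/QPhi => q qP; have := Ht _ (map_f _ qP) t; rewrite /= (ltW t0) lexx => /(_ erefl).
    by rewrite /ev vdotDr vdotZr addrAC.
  have := Qle _ Q1; rewrite vdotDr vdotZr ce0 => ?.
  have : 0 < t * vdot c c by rewrite mulr_gt0.
  lra.
move/hasP: hasT => [q qP /andP [/eqP q0 qc]].
have [l [el1 el2]] : exists l, - q.1 = l *: c /\ - q.2 = l * - e.
  apply: (@core _ _ c (- q.1) x0 (- e) (- q.2) eps e0).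
  - by rewrite ce0 subrr.
  - by rewrite vdotNl -opprD; move: q0; rewrite /ev => ->; rewrite oppr0.
  - move=> y Ny Ey; have Ey' : vdot c y = e by lra.
    have := (QPhi y).1 (Piece y Ey' Ny) q qP.
    by rewrite /ev vdotNl => ?; lra.
have l0 : 0 < l.
  have : 0 < vdot (- q.1) c by rewrite vdotNl oppr_gt0.
  by rewrite el1 vdotZl pmulr_lgt0.
have qeq : forall x, vdot c x = e <-> ev q x = 0.
  move=> x; have -> : ev q x = l * (e - vdot c x).
    rewrite /ev -(opprK q.1) -(opprK q.2) el1 el2 vdotNl vdotZl; ring.
  split => [->|]; first by rewrite subrr mulr0.
  move/eqP; rewrite mulf_eq0 (gt_eqF l0) /= subr_eq0 => /eqP ->; done.
have [g [j [gP jH qE]]] : exists g j, [/\ (g == hp) || (g == hm), j \in H & q = slack (s j) j g].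
  move: qP; rewrite mem_cat => /orP [] /mapP [j jH ->].
    by exists hp, j; rewrite eqxx.
  by exists hm, j; rewrite eqxx orbT.
have gH : g \in H by case/orP: gP => /eqP ->.
have HE : forall x, vdot c x = e <-> ht g x = ht j x.
  move=> x; rewrite qeq qE ev_slack; case: (s j); split => E; lra.
have PieceQ : forall y, near x0 y eps -> ht g y = ht j y -> vproj sigma y.
  by move=> y Ny Ey; apply: Piece => //; apply/HE.
have E0 : ht g x0 = ht j x0 by apply/HE.
have [jg|jg] := eqVneq j g.
  by exfalso; move: qc; rewrite qE jg /slack; case: (s g); rewrite /= subrr vdot0l ltxx.
have [jpm|jpm] := boolP ((j == hp) || (j == hm)).
  exists (hp.1 - hm.1, hm.2 - hp.2); first exact: mem_head.
  move=> x; rewrite HE entryE.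
  case/orP: gP => /eqP gE; case/orP: jpm => /eqP jE; move: jg; rewrite gE jE ?eqxx //.
  by move=> _; split => E; lra.
have [nhp nhm] : j != hp /\ j != hm by move: jpm; rewrite negb_or => /andP.
have jHf : j \in Hf.
  apply/Hfdef; split => //; apply: (facet_lemma (s := s) k1 GC.1 Cdef gH jH _ e0 E0).
    by rewrite eq_sym.
  move=> y Ny Ey; have /Qiff [A B] := PieceQ y Ny Ey.
  by case/orP: gP => /eqP gE; rewrite -Ey gE.
exists (entry j).
  by rewrite inE; apply/orP; right; apply/mapP; exists j => //; rewrite mem_filter nhp nhm.
move=> x; rewrite HE /entry.
case sj: (s j); rewrite entryE.
  case/orP: gP => /eqP gE; last by rewrite gE.
  exfalso; rewrite gE in E0 PieceQ.
  apply: (KeyGen (h1 := hp) (h2 := j) (h3 := hm) (h4 := j) GC hpH jH hmH jH _ _ _ e0 E0).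
  - by rewrite eq_sym.
  - by rewrite eq_sym.
  - by rewrite (negbTE hpm) /= eq_sym (negbTE nhp).
  move=> y Ny Ey; have /Qiff [_ Bm] := PieceQ y Ny Ey.
  have := above j jH sj _ Bm; have := hmle _ _ Bm => /= ? ?; lra.
case/orP: gP => /eqP gE; first by rewrite gE.
exfalso; rewrite gE in E0 PieceQ.
apply: (KeyGen (h1 := hm) (h2 := j) (h3 := hp) (h4 := j) GC hmH jH hpH jH _ _ _ e0 E0).
- by rewrite eq_sym.
- by rewrite eq_sym.
- by rewrite eq_sym (negbTE hpm) /= eq_sym (negbTE nhm).
move=> y Ny Ey; have /Qiff [Bp _] := PieceQ y Ny Ey.
have := below j jH sj _ Bp; have := hmle _ _ Bp => /= ? ?; lra.
Qed.
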